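(* Let $G$ be a $(P_5,\text{chair})$-free graph and let $C=v_1v_2v_3v_4v_5v_1$ be an induced $C_5$ in $G$. Let $1\le i\le 5$, let $u,v\in S_4(i)$ with $uv\notin E(G)$, and let $s\in R_i=S^1_3(i+1)\cup S^1_3(i-1)\cup S^2_3(i)\cup S_4(i+1)\cup S_4(i-1)\cup S_5$. Then $s$ is adjacent to at least one of $u,v$.
   Context: All graphs are finite and simple; $P_5$ is the path on 5 vertices; the chair is a $P_4$ plus a vertex adjacent to exactly one of the two middle vertices of the $P_4$; ''$H$-free'' means no induced subgraph isomorphic to $H$. Indices modulo 5; for $v\notin V(C)$ let $N_C(v)=N(v)\cap V(C)$. $S^1_3(j)=\{v\notin V(C): N_C(v)=\{v_{j-1},v_j,v_{j+1}\}\}$, $S^2_3(j)=\{v\notin V(C): N_C(v)=\{v_{j-2},v_j,v_{j+2}\}\}$, $S_4(j)=\{v\notin V(C): N_C(v)=\{v_{j-2},v_{j-1},v_{j+1},v_{j+2}\}\}$, $S_5=\{v\notin V(C): N_C(v)=V(C)\}$. *)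

(* Defs.v *)
From mathcomp Require Import all_boot.
Set Implicit Arguments. Unset Strict Implicit. Unset Printing Implicit Defensive.

Definition simple_graph (T : finType) (e : rel T) : Prop :=
  symmetric e /\ irreflexive e.

Definition has_induced (T : finType) (e : rel T) (n : nat) (h : rel 'I_n) : Prop :=
  exists f : 'I_n -> T, injective f /\ forall a b, e (f a) (f b) = h a b.

Definition free_of (T : finType) (e : rel T) (n : nat) (h : rel 'I_n) : Prop :=
  ~ has_induced e h.

Definition P5_rel : rel 'I_5 :=
  fun a b => (a.+1 == b :> nat) || (b.+1 == a :> nat).

(* chair : path 0-1-2-3 plus vertex 4 adjacent only to 1 *)
Definition chair_rel : rel 'I_5 :=
  fun a b =>
    [|| (a.+1 == b :> nat) && (b <= 3),
        (b.+1 == a :> nat) && (a <= 3),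
        (a == 4 :> nat) && (b == 1 :> nat) |
        (a == 1 :> nat) && (b == 4 :> nat)].

Definition sh (i : 'I_5) (k : nat) : 'I_5 := inord ((i + k) %% 5).

Definition induced_C5 (T : finType) (e : rel T) (v : 'I_5 -> T) : Prop :=
  injective v /\ forall i j, e (v i) (v j) = (j == sh i 1) || (i == sh j 1).

Definition NC (T : finType) (e : rel T) (v : 'I_5 -> T) (x : T) : {set 'I_5} :=
  [set j | e x (v j)].

Definition offC (T : finType) (v : 'I_5 -> T) (x : T) : bool :=
  x \notin [seq v j | j : 'I_5].

(* S^1_3(j): N_C = {j-1, j, j+1} *)
Definition S13 (T : finType) (e : rel T) (v : 'I_5 -> T) (j : 'I_5) (x : T) : Prop :=
  offC v x /\ NC e v x = [set sh j 4; j; sh j 1].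
(* S^2_3(j): N_C = {j-2, j, j+2} *)
Definition S23 (T : finType) (e : rel T) (v : 'I_5 -> T) (j : 'I_5) (x : T) : Prop :=
  offC v x /\ NC e v x = [set sh j 3; j; sh j 2].
(* S_4(j): N_C = {j-2, j-1, j+1, j+2} *)
Definition S4 (T : finType) (e : rel T) (v : 'I_5 -> T) (j : 'I_5) (x : T) : Prop :=
  offC v x /\ NC e v x = [set sh j 3; sh j 4; sh j 1; sh j 2].
Definition S5 (T : finType) (e : rel T) (v : 'I_5 -> T) (x : T) : Prop :=
  offC v x /\ NC e v x = [set: 'I_5].

(* Main.v *)
Require Import Defs.
From mathcomp Require Import all_boot.

Lemma adj_neq (T : finType) (e : rel T) a b :
  irreflexive e -> e a b -> a != b.
Proof. by move=> irr H; apply/eqP=> E; move: H; rewrite E irr. Qed.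

Lemma dist_neq (T : finType) (e : rel T) a b c :
  e a c -> ~~ e b c -> a != b.
Proof. by move=> H1 H2; apply/eqP=> E; move: H2; rewrite -E H1. Qed.

Lemma chair_of (T : finType) (e : rel T) x0 x1 x2 x3 x4 :
  simple_graph e -> x0 != x4 ->
  e x0 x1 -> e x1 x2 -> e x2 x3 -> e x4 x1 ->
  ~~ e x0 x2 -> ~~ e x0 x3 -> ~~ e x0 x4 -> ~~ e x1 x3 -> ~~ e x2 x4 ->
  ~~ e x3 x4 -> has_induced e chair_rel.
Proof.
move=> [sym irr] d04 h01 h12 h23 h41 n02 n03 n04 n13 n24 n34.
have h10 : e x1 x0 by rewrite sym.
have h21 : e x2 x1 by rewrite sym.
have h32 : e x3 x2 by rewrite sym.
have h14 : e x1 x4 by rewrite sym.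
have n20 : ~~ e x2 x0 by rewrite sym.
have n30 : ~~ e x3 x0 by rewrite sym.
have n40 : ~~ e x4 x0 by rewrite sym.
have n31 : ~~ e x3 x1 by rewrite sym.
have n42 : ~~ e x4 x2 by rewrite sym.
have n43 : ~~ e x4 x3 by rewrite sym.
have d01 := @adj_neq _ _ _ _ irr h01. have d12 := @adj_neq _ _ _ _ irr h12.
have d23 := @adj_neq _ _ _ _ irr h23. have d41 := @adj_neq _ _ _ _ irr h41.
have d02 : x2 != x0 := @dist_neq _ _ _ _ _ h23 n03.
have d03 : x0 != x3 := @dist_neq _ _ _ _ _ h01 n31.
have d13 : x1 != x3 := @dist_neq _ _ _ _ _ h10 n30.
have d24 : x2 != x4 := @dist_neq _ _ _ _ _ h23 n43.
have d34 : x3 != x4 := @dist_neq _ _ _ _ _ h32 n42.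
pose f := fun a : 'I_5 => match val a with 0 => x0 | 1 => x1 | 2 => x2 | 3 => x3 | _ => x4 end.
exists f; split.
  move=> [[|[|[|[|[|a]]]]] Ha] [[|[|[|[|[|b]]]]] Hb] //=; rewrite /f /=;
  try (by move=> _; apply/val_inj);
  move/eqP; rewrite ?(negbTE d01, negbTE d12, negbTE d23, negbTE d41, negbTE d02,
     negbTE d03, negbTE d13, negbTE d24, negbTE d34, negbTE d04) //;
  rewrite eq_sym ?(negbTE d01, negbTE d12, negbTE d23, negbTE d41, negbTE d02,
     negbTE d03, negbTE d13, negbTE d24, negbTE d34, negbTE d04) //.
move=> [[|[|[|[|[|a]]]]] Ha] [[|[|[|[|[|b]]]]] Hb] //=; rewrite /f /chair_rel /= ?irr;
  rewrite ?(h01, h12, h23, h41, h10, h21, h32, h14, negbTE n02, negbTE n03,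
    negbTE n04, negbTE n13, negbTE n24, negbTE n34, negbTE n20, negbTE n30,
    negbTE n40, negbTE n31, negbTE n42, negbTE n43) //.
Qed.

Lemma val_sh (i : 'I_5) k : val (sh i k) = (i + k) %% 5.
Proof. by rewrite /sh /= inordK // ltn_mod. Qed.

Lemma NCe (T : finType) (e : rel T) (v : 'I_5 -> T) x S :
  NC e v x = S -> forall j, e x (v j) = (j \in S).
Proof. by move=> <- j; rewrite inE. Qed.

Theorem mainTheorem11 (T : finType) (e : rel T) (v : 'I_5 -> T) (i : 'I_5)
    (u w s : T) :
  simple_graph e ->
  free_of e P5_rel -> free_of e chair_rel ->
  induced_C5 e v ->
  S4 e v i u -> S4 e v i w -> u != w -> ~~ e u w ->
  (S13 e v (sh i 1) s \/ S13 e v (sh i 4) s \/ S23 e v i s \/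
   S4 e v (sh i 1) s \/ S4 e v (sh i 4) s \/ S5 e v s) ->
  e s u || e s w.
Proof.
move=> G P5f chf [vinj vE] [ou Nu] [ow Nw] uw nuw Hs.
have [sym irr] := G.
apply/negPn/negP => /norP [nsu nsw].
have nus : ~~ e u s by rewrite sym.
have nws : ~~ e w s by rewrite sym.
have nwu : ~~ e w u by rewrite sym.
have eu := @NCe _ _ _ _ _ Nu. have ew := @NCe _ _ _ _ _ Nw.
have eu' : forall j, e (v j) u = e u (v j) by move=> j; rewrite sym.
have ew' : forall j, e (v j) w = e w (v j) by move=> j; rewrite sym.
have es' : forall j, e (v j) s = e s (v j) by move=> j; rewrite sym.
apply: chf.
case: Hs => [[os Ns]|[[os Ns]|[[os Ns]|[[os Ns]|[[os Ns]|[os Ns]]]]]];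
  have es := @NCe _ _ _ _ _ Ns;
  [ apply: (@chair_of _ _ u (v (sh i 4)) (v i) s w)
  | apply: (@chair_of _ _ u (v (sh i 1)) (v i) s w)
  | apply: (@chair_of _ _ u (v (sh i 4)) (v i) s w)
  | apply: (@chair_of _ _ u (v (sh i 1)) (v i) s w)
  | apply: (@chair_of _ _ u (v (sh i 4)) (v i) s w)
  | apply: (@chair_of _ _ u (v (sh i 2)) s (v i) w) ] => //;
  rewrite ?eu' ?ew' ?es' ?eu ?ew ?es ?vE ?inE;
  case: i {Nu Nw eu ew eu' ew' es' Ns es os} => [[|[|[|[|[|m]]]]] Hi] //; by rewrite -!val_eqE /= !val_sh.
Qed.
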